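(* Let $A \ge B \ge C \ge 1$ be integers, $e=A+B+C-3$, $m=\lfloor\frac{e-1}{2}\rfloor$, and let $\Bbbk$ be a field. For $0\le r\le e$ let $U_r : R_r \to R_{r+1}$ be multiplication by $x+y+z$ on the degree-$r$ component of $R=\Bbbk[x,y,z]/(x^A,y^B,z^C)$. Then the maps $U_r$ for all $0\le r \le m$ are injective if and only if $U_m$ is injective.
   Context: $R$ is graded by total degree, $R_r$ denotes its degree-$r$ homogeneous component (spanned by the monomials $x^iy^jz^k$ with $i<A$, $j<B$, $k<C$, $i+j+k=r$). *)

(* Defs.v *)
From HB Require Import structures.
From mathcomp Require Import all_boot all_order all_algebra.
Set Implicit Arguments. Unset Strict Implicit. Unset Printing Implicit Defensive.
Import Order.TTheory GRing.Theory Num.Theory.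
Local Open Scope ring_scope.

(* Monomials x^i y^j z^k of R = K[x,y,z]/(x^A,y^B,z^C): i<A, j<B, k<C.
   They form a K-basis of R; an element of R is its coefficient vector. *)
Definition mon (A B C : nat) := ('I_A * 'I_B * 'I_C)%type.

Definition mdeg A B C (t : mon A B C) : nat := (t.1.1 + t.1.2 + t.2)%N.

(* f lies in the homogeneous component R_r (r : int; R_r = 0 for r < 0). *)
Definition in_R (K : fieldType) A B C (r : int) (f : {ffun mon A B C -> K}) :=
  forall t, f t != 0 -> (mdeg t)%:Z = r.

(* Multiplication by x + y + z on R, in the monomial basis
   (monomials leaving the box vanish in the quotient). *)
Definition mulxyz (K : fieldType) A B C (f : {ffun mon A B C -> K})
  : {ffun mon A B C -> K} :=
  [ffun t : mon A B C =>
     (\sum_(s : mon A B C | [&& s.1.1.+1 == t.1.1 :> nat,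
                                s.1.2 == t.1.2 :> nat & s.2 == t.2 :> nat]) f s)
   + (\sum_(s : mon A B C | [&& s.1.1 == t.1.1 :> nat,
                                s.1.2.+1 == t.1.2 :> nat & s.2 == t.2 :> nat]) f s)
   + (\sum_(s : mon A B C | [&& s.1.1 == t.1.1 :> nat,
                                s.1.2 == t.1.2 :> nat & s.2.+1 == t.2 :> nat]) f s)].

Definition U_injective (K : fieldType) A B C (r : int) :=
  forall f g : {ffun mon A B C -> K},
    in_R r f -> in_R r g -> mulxyz f = mulxyz g -> f = g.

(* Main.v *)
Require Import Defs.
From HB Require Import structures.
From mathcomp Require Import all_boot all_order all_algebra.
From mathcomp Require Import zify ring.
Set Implicit Arguments. Unset Strict Implicit. Unset Printing Implicit Defensive.
Import Order.TTheory GRing.Theory Num.Theory.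
Local Open Scope ring_scope.

Section S.
Variables (K : fieldType) (A B C : nat).
Notation M := (mon A B C).
Definition NF := nat -> nat -> nat -> K.
Definition Box (i j k : nat) := [&& (i < A)%N, (j < B)%N & (k < C)%N].
Definition G (f : {ffun M -> K}) : NF := fun i j k =>
  \sum_(s : M | [&& s.1.1 == i :> nat, s.1.2 == j :> nat & s.2 == k :> nat]) f s.
Definition mk (H : NF) : {ffun M -> K} := [ffun t : M => H t.1.1 t.1.2 t.2].
Definition Lz (H : NF) : NF := fun i j k => if Box i j k then
  (if i is i'.+1 then H i' j k else 0) + (if j is j'.+1 then H i j' k else 0)
  + (if k is k'.+1 then H i j k' else 0) else 0.
Definition Sx (H : NF) : NF := fun i j k => if Box i j k then
  (if i is i'.+1 then H i' j k else 0) else 0.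
Definition Sy (H : NF) : NF := fun i j k => if Box i j k then
  (if j is j'.+1 then H i j' k else 0) else 0.
Definition Sz (H : NF) : NF := fun i j k => if Box i j k then
  (if k is k'.+1 then H i j k' else 0) else 0.
Definition supp (H : NF) := forall i j k, ~~ Box i j k -> H i j k = 0.
Definition degF (n : nat) (H : NF) := forall i j k, H i j k != 0 -> (i + j + k = n)%N.
Definition kernF n := forall H, supp H -> degF n H -> (forall i j k, Lz H i j k = 0) ->
  forall i j k, H i j k = 0.
Definition kernN (n : nat) := forall f : {ffun M -> K}, in_R n%:Z f -> mulxyz f = 0 -> f = 0.

Lemma Box_le i j k i' j' k' : (i' <= i)%N -> (j' <= j)%N -> (k' <= k)%N ->
  Box i j k -> Box i' j' k'.
Proof. rewrite /Box => *; lia. Qed.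

Lemma G1 f (t : M) : G f t.1.1 t.1.2 t.2 = f t.
Proof.
rewrite /G (big_pred1 t) // => s.
case: s t => [[a b] c] [[a' b'] c'] /=.
by rewrite !xpair_eqE andbA.
Qed.

Lemma G2 f i j k : ~~ Box i j k -> G f i j k = 0.
Proof.
move=> hb; rewrite /G big_pred0 // => s; apply/negbTE; apply: contra hb.
case/and3P=> /eqP <- /eqP <- /eqP <-; rewrite /Box; apply/and3P; split; exact: ltn_ord.
Qed.

Lemma Gmk H i j k : supp H -> G (mk H) i j k = H i j k.
Proof.
move=> sH; case hb: (Box i j k); last by rewrite G2 ?hb // sH ?hb.
case/and3P: hb => hi hj hk.
have := G1 (mk H) (Ordinal hi, Ordinal hj, Ordinal hk); rewrite /= => ->.
by rewrite ffunE.
Qed.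

Lemma Gmul f i j k : G (mulxyz f) i j k = Lz (G f) i j k.
Proof.
rewrite /Lz; case hb: (Box i j k); last by rewrite G2 ?hb.
case/and3P: hb => hi hj hk.
have := G1 (mulxyz f) (Ordinal hi, Ordinal hj, Ordinal hk); rewrite /= => ->.
rewrite ffunE /=; congr (_ + _ + _).
- case: i hi => [|i] hi; first by rewrite big_pred0.
  by apply: eq_bigl.
- case: j hj => [|j] hj; first by rewrite big_pred0 // => s; rewrite andbF.
  by apply: eq_bigl.
- case: k hk => [|k] hk; first by rewrite big_pred0 // => s; rewrite !andbF.
  by apply: eq_bigl.
Qed.
Lemma Lz_ext H1 H2 i j k : (forall i j k, H1 i j k = H2 i j k) -> Lz H1 i j k = Lz H2 i j k.
Proof. by move=> e; rewrite /Lz; case: i => [|i]; case: j => [|j]; case: k => [|k]; rewrite ?e. Qed.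

Lemma kernN_F n : kernN n -> kernF n.
Proof.
move=> hN H sH dH hL i j k.
have Hf : mk H = 0.
  apply: hN.
  - by move=> t; rewrite ffunE /mdeg => /dH ->.
  - apply/ffunP => t; rewrite -[LHS]G1 Gmul (Lz_ext _ _ _ (fun i j k => Gmk i j k sH)) hL.
    by rewrite ffunE.
by rewrite -(Gmk i j k sH) Hf /G big1 // => s _; rewrite ffunE.
Qed.

Lemma kernF_N n : kernF n -> kernN n.
Proof.
move=> hF f inf hm; apply/ffunP => t; rewrite ffunE -G1.
apply: hF.
- by move=> i' j' k' hb; rewrite G2.
- move=> i' j' k'; case hb: (Box i' j' k'); last by rewrite G2 ?hb ?eqxx.
  case/and3P: hb => hi hj hk.
  have := G1 f (Ordinal hi, Ordinal hj, Ordinal hk); rewrite /= => -> /inf.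
  by rewrite /mdeg /= => /eqP; rewrite eqz_nat => /eqP.
- by move=> i' j' k'; rewrite -Gmul hm /G big1 // => s _; rewrite ffunE.
Qed.

Ltac boxes hb := repeat (rewrite (Box_le _ _ _ hb) ?leqnn ?leqnSn //).

Lemma LzSx H i j k : Lz (Sx H) i j k = Sx (Lz H) i j k.
Proof.
rewrite /Lz /Sx; case hb: (Box i j k) => //.
case: i hb => [|i] hb; case: j hb => [|j] hb; case: k hb => [|k] hb; boxes hb;
  rewrite ?addr0 ?add0r //.
Qed.
Lemma LzSy H i j k : Lz (Sy H) i j k = Sy (Lz H) i j k.
Proof.
rewrite /Lz /Sy; case hb: (Box i j k) => //.
case: i hb => [|i] hb; case: j hb => [|j] hb; case: k hb => [|k] hb; boxes hb;
  rewrite ?addr0 ?add0r //.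
Qed.
Lemma LzSz H i j k : Lz (Sz H) i j k = Sz (Lz H) i j k.
Proof.
rewrite /Lz /Sz; case hb: (Box i j k) => //.
case: i hb => [|i] hb; case: j hb => [|j] hb; case: k hb => [|k] hb; boxes hb;
  rewrite ?addr0 ?add0r //.
Qed.

Lemma step n : kernF n.+1 -> (n < A + B + C - 3)%N -> kernF n.
Proof.
move=> hF hn H sH dH hL.
have Hx : forall i j k, Sx H i j k = 0.
  apply: hF.
  - by move=> i j k /negbTE; rewrite /Sx => ->.
  - move=> i j k; rewrite /Sx; case: ifP => _; last by rewrite eqxx.
    case: i => [|i] /=; [by rewrite eqxx | move/dH; lia].
  - move=> i j k; rewrite LzSx /Sx; case: ifP => // _; case: i => //= i; rewrite hL.
have Hy : forall i j k, Sy H i j k = 0.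
  apply: hF.
  - by move=> i j k /negbTE; rewrite /Sy => ->.
  - move=> i j k; rewrite /Sy; case: ifP => _; last by rewrite eqxx.
    case: j => [|j] /=; [by rewrite eqxx | move/dH; lia].
  - move=> i j k; rewrite LzSy /Sy; case: ifP => // _; case: j => //= j; rewrite hL.
have Hz : forall i j k, Sz H i j k = 0.
  apply: hF.
  - by move=> i j k /negbTE; rewrite /Sz => ->.
  - move=> i j k; rewrite /Sz; case: ifP => _; last by rewrite eqxx.
    case: k => [|k] /=; [by rewrite eqxx | move/dH; lia].
  - move=> i j k; rewrite LzSz /Sz; case: ifP => // _; case: k => //= k; rewrite hL.
move=> i j k.
case hb: (Box i j k); last by rewrite sH ?hb.
case: (ltnP i.+1 A) => hi.
  have := Hx i.+1 j k; rewrite /Sx; case/and3P: hb => _ hj hk.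
  by rewrite /Box hi hj hk.
case: (ltnP j.+1 B) => hj.
  have := Hy i j.+1 k; rewrite /Sy; case/and3P: hb => hi' _ hk.
  by rewrite /Box hi' hj hk.
case: (ltnP k.+1 C) => hk.
  have := Hz i j k.+1; rewrite /Sz; case/and3P: hb => hi' hj' _.
  by rewrite /Box hi' hj' hk.
apply/eqP; apply: contraT => /dH.
move: hb; rewrite /Box => /and3P [? ? ?]; lia.
Qed.

Lemma stepN n : kernN n.+1 -> (n < A + B + C - 3)%N -> kernN n.
Proof. by move=> h hn; apply: kernF_N; apply: step hn; apply: kernN_F. Qed.

Lemma mulxyzB (f g : {ffun M -> K}) : mulxyz (f - g) = mulxyz f - mulxyz g.
Proof.
apply/ffunP => t; rewrite !ffunE.
under eq_bigr do rewrite !ffunE.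
under [X in _ + X + _]eq_bigr do rewrite !ffunE.
under [X in _ + _ + X]eq_bigr do rewrite !ffunE.
idtac.
rewrite !sumrB.
set a := \sum_(_ | _) f _. set b := \sum_(_ | _) g _.
set c := \sum_(_ | _) f _. set d := \sum_(_ | _) g _.
set x := \sum_(_ | _) f _. set y := \sum_(_ | _) g _.
clearbody a b c d x y; ring.
Qed.

Lemma kernN_U n : kernN n <-> U_injective K A B C n%:Z.
Proof.
split.
- move=> h f g hf hg e; apply/eqP; rewrite -subr_eq0; apply/eqP; apply: h.
  + move=> t; rewrite !ffunE => hne.
    case: (eqVneq (f t) 0) => hft; last exact: hf.
    by apply: hg; move: hne; rewrite hft sub0r oppr_eq0.
  + by rewrite mulxyzB e subrr.
- move=> h f hf hm; apply: h => //.
  + by move=> t; rewrite ffunE eqxx.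
  + by rewrite hm; apply/ffunP => t; rewrite !ffunE !big1 ?addr0 // => s _; rewrite ffunE.
Qed.
End S.

Theorem corollary1 (K : fieldType) (A B C : nat) :
  (1 <= C)%N -> (C <= B)%N -> (B <= A)%N ->
  let e : int := (A + B + C - 3)%N%:Z in
  let m : int := ((e - 1) %/ 2)%Z in
  (forall r : int, 0 <= r <= m -> U_injective K A B C r)
  <-> U_injective K A B C m.
Proof.
move=> hC hCB hBA e m.
have hm2 : m * 2 <= e - 1 by apply: lez_floor.
split.
- move=> h; case: (lerP 0 m) => hm0; first by apply: h; rewrite hm0 lexx.
  move=> f g hf hg _.
  have z (u : {ffun mon A B C -> K}) : in_R m u -> u = 0.
    move=> hu; apply/ffunP => t; rewrite ffunE; apply/eqP; apply: contraT => /hu ht.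
    by move: hm0; rewrite -ht ltNge le0z_nat.
  by rewrite (z f hf) (z g hg).
- move=> hm r /andP [r0 rm].
  have m0 : 0 <= m by apply: le_trans rm.
  have [M hM] : exists M : nat, m = M%:Z by exists `|m|%N; rewrite gez0_abs.
  have [n hn] : exists n : nat, r = n%:Z by exists `|r|%N; rewrite gez0_abs.
  have hME : (M < A + B + C - 3)%N.
    rewrite -ltz_nat; move: hm2 m0; rewrite hM /e; lia.
  have hnM : (n <= M)%N by rewrite -lez_nat -hn -hM.
  rewrite hn; apply/kernN_U.
  move: hm; rewrite hM => /kernN_U hk.
  have: forall d, (n + d = M)%N -> kernN K A B C n.
    move=> d; elim: d n {hn hnM} => [|d IH] n'; first by rewrite addn0 => ->.
    move=> hd; apply: stepN; first by apply: IH; rewrite addSnnS.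
    lia.
  by move=> H; apply: (H (M - n)%N); rewrite subnKC.
Qed.
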